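(* The LCM matrix of any GCD closed set of positive integers with at most $7$ elements is invertible. Moreover, if $S$ is a GCD closed set with $8$ elements and $[S]$ is not invertible, then $(S,\mid)$ is isomorphic to the cube semilattice, i.e. the Boolean lattice of all subsets of a $3$-element set ordered by inclusion.
   Context: $S$ is GCD closed if $\gcd(x,y)\in S$ for all $x,y\in S$. The LCM matrix $[S]$ of $S=\{x_1,\dots,x_n\}$ has $(i,j)$ entry $\mathrm{lcm}(x_i,x_j)$. *)

(* Defs.v *)
From mathcomp Require Import all_boot all_order all_algebra.
Set Implicit Arguments. Unset Strict Implicit. Unset Printing Implicit Defensive.
Import GRing.Theory Num.Theory.

(* A finite set of positive integers is represented by a duplicate-free list. *)
Definition gcd_closed (S : seq nat) : bool :=
  all (fun x => all (fun y => gcdn x y \in S) S) S.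

Definition lcm_matrix (S : seq nat) : 'M[rat]_(size S) :=
  \matrix_(i < size S, j < size S) ((lcmn (nth 0 S i) (nth 0 S j))%:R : rat).

Definition iso_to_cube (S : seq nat) : Prop :=
  exists f : nat -> {set 'I_3},
    {in S &, injective f} /\
    (forall A : {set 'I_3}, exists2 x, x \in S & f x = A) /\
    {in S &, forall x y, (x %| y) = (f x \subset f y)}.

(* Main.v *)
Require Import Defs.
From mathcomp Require Import all_boot all_order all_algebra.
From mathcomp Require Import zify ring lra.
Set Implicit Arguments. Unset Strict Implicit. Unset Printing Implicit Defensive.
Import Order.TTheory GRing.Theory Num.Theory.


Fixpoint G (x : nat) (Y : seq nat) : rat :=
  match Y with [::] => ((x%:R)^-1)%R | y :: Y' => (G x Y' - G (gcdn x y) Y')%R end.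

Lemma G_swap x a b L : G x (a :: b :: L) = G x (b :: a :: L).
Proof. rewrite /= gcdnAC. ring. Qed.

Lemma G_catC x L1 a L2 : G x (L1 ++ a :: L2) = G x (a :: L1 ++ L2).
Proof.
elim: L1 x => [//|b L1 IH] x /=.
by rewrite !IH [RHS]G_swap.
Qed.

Lemma G_perm L M x : perm_eq L M -> G x L = G x M.
Proof.
elim: L x M => [|a L IH] x M.
  by move=> /perm_size; case: M.
move=> pLM.
have aM : a \in M by rewrite -(perm_mem pLM) mem_head.
case/splitPr: aM pLM => M1 M2 pLM.
rewrite G_catC /=.
have pL : perm_eq L (M1 ++ M2).
  by rewrite -(perm_cons a); apply: (perm_trans pLM); rewrite -cat1s perm_catCA.
by rewrite !(IH _ _ pL).
Qed.

Lemma G_zero x L : has (fun l => x %| l) L -> G x L = 0%R.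
Proof.
elim: L x => [//|l L IH] x /= /orP[xl|hL].
  by rewrite (gcdn_idPl xl) subrr.
rewrite !IH ?subrr //.
by apply: sub_has hL => z; apply: dvdn_trans (dvdn_gcdl _ _).
Qed.

Lemma G_rem x d L : has (fun l => d %| l) L -> G x (d :: L) = G x L.
Proof.
move=> h /=; rewrite (G_zero (x := gcdn x d)) ?subr0 //.
by apply: sub_has h => z; apply: dvdn_trans (dvdn_gcdr _ _).
Qed.

Lemma G_cat_rem x L1 L2 : all (fun d => has (fun l => d %| l) L2) L1 ->
  G x (L1 ++ L2) = G x L2.
Proof.
elim: L1 => [//|d L1 IH] /andP[h1 h2].
by rewrite cat_cons G_rem ?IH // has_cat h1 orbT.
Qed.

Lemma G_map z L x : x %| z -> G x (map (gcdn z) L) = G x L.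
Proof.
elim: L x => [//|l L IH] x xz /=.
rewrite gcdnA (gcdn_idPl xz) IH // IH //.
exact: dvdn_trans (dvdn_gcdl _ _) xz.
Qed.

Lemma G1 x y : G x [:: y] = ((x%:R)^-1 - ((gcdn x y)%:R)^-1)%R.
Proof. by []. Qed.

Definition bg (Y : seq nat) (t : nat) := \big[gcdn/0]_(y <- Y | t %| y) y.

Lemma dvd_bg u Y t : u %| bg Y t <-> (forall y, y \in Y -> t %| y -> u %| y).
Proof.
rewrite /bg; elim: Y => [|y Y IH].
  by rewrite big_nil dvdn0; split.
rewrite big_cons; case: ifP => ty.
  rewrite dvdn_gcd; split.
    case/andP=> uy /IH h z; rewrite inE => /orP[/eqP->//|]; exact: h.
  move=> h; rewrite h ?mem_head //=; apply/IH => z zY; apply: h.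
  by rewrite inE zY orbT.
rewrite IH; split.
  move=> h z; rewrite inE => /orP[/eqP->|]; [by rewrite ty | exact: h].
by move=> h z zY; apply: h; rewrite inE zY orbT.
Qed.

Definition cl x Y t := gcdn x (bg Y t).
Definition closed x Y t := (t %| x) && (cl x Y t %| t).

Lemma dvd_cl u x Y t :
  u %| cl x Y t <-> u %| x /\ (forall y, y \in Y -> t %| y -> u %| y).
Proof. by rewrite /cl dvdn_gcd; split => [/andP[h /dvd_bg]|[-> /dvd_bg]]. Qed.

Lemma closedI x Y t : t %| x ->
  (forall u, u %| x -> (forall y, y \in Y -> t %| y -> u %| y) -> u %| t) ->
  closed x Y t.
Proof.
move=> tx h; rewrite /closed tx /=.
by have [h1 h2] := (dvd_cl (cl x Y t) x Y t).1 (dvdnn _); apply: h.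
Qed.

Definition antichain (Y : seq nat) :=
  forall y y', y \in Y -> y' \in Y -> y %| y' -> y = y'.

Lemma max_in (s : seq nat) : s != [::] ->
  exists2 a, a \in s & forall m, m \in s -> m <= a.
Proof.
elim: s => [//|a s IH] _.
case: (eqVneq s [::]) => [->|sn].
  by exists a => [|m]; rewrite ?mem_head // inE => /eqP->.
case: (IH sn) => b bs hb.
case: (leqP a b) => ab.
  exists b; first by rewrite inE bs orbT.
  by move=> m; rewrite inE => /orP[/eqP->//|]; exact: hb.
exists a; first exact: mem_head.
move=> m; rewrite inE => /orP[/eqP->//|/hb mb]; exact: leq_trans mb (ltnW ab).
Qed.

Lemma inv_half (g y : nat) : 0 < g -> g.*2 <= y ->
  ((y%:R)^-1 <= (g%:R)^-1 / 2 :> rat)%R.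
Proof.
move=> g0 gy.
have -> : ((g%:R)^-1 / 2 = ((g.*2)%:R)^-1 :> rat)%R.
  by rewrite -muln2 natrM invfM.
have g2 : 0 < g.*2 by rewrite double_gt0.
rewrite lef_pV2 ?ler_nat // ?posrE ?ltr0n //.
exact: leq_trans gy.
Qed.


Lemma half_le g y : 0 < y -> g %| y -> g != y -> g.*2 <= y.
Proof.
move=> y0 gy ne; have e := divnK gy.
move: e ne; case: (y %/ g) => [|[|k]] e ne.
- by move: y0; rewrite -e.
- by rewrite -e mul1n eqxx in ne.
- rewrite -e; nia.
Qed.

Lemma base2 x y1 y2 : 0 < x -> y1 %| x -> y2 %| x ->
  ~~ (y1 %| y2) -> ~~ (y2 %| y1) -> (0 < G x [:: y1; y2])%R.
Proof.
move=> x0 h1 h2 n12 n21 /=.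
rewrite (gcdn_idPr h1) (gcdn_idPr h2).
have y10 : 0 < y1 by apply: dvdn_gt0 x0 h1.
have y20 : 0 < y2 by apply: dvdn_gt0 x0 h2.
set g := gcdn y1 y2.
have g0 : 0 < g by rewrite gcdn_gt0 y10.
have a1 := inv_half g0 (half_le y10 (dvdn_gcdl _ _) _).
have a2 := inv_half g0 (half_le y20 (dvdn_gcdr _ _) _).
have ne1 : g != y1.
  by apply: contra n12 => /eqP e; rewrite -e /g dvdn_gcdr.
have ne2 : g != y2.
  by apply: contra n21 => /eqP e; rewrite -e /g dvdn_gcdl.
have := a1 ne1; have := a2 ne2.
have : (0 < (x%:R)^-1 :> rat)%R by rewrite invr_gt0 ltr0n.
have : (0 < (g%:R)^-1 :> rat)%R by rewrite invr_gt0 ltr0n.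
lra.
Qed.


Lemma two_incomp (Y : seq nat) y (x : nat) : 0 < x -> uniq Y -> 1 < size Y ->
  (forall y, y \in Y -> y %| x) -> y \in Y ->
  ~~ has (fun m => all (fun m' => m' %| m) (map (gcdn y) (rem y Y)))
         (map (gcdn y) (rem y Y)) ->
  exists y', exists y'', [/\ y' \in Y, y'' \in Y, y' != y, y'' != y &
     ~~ (gcdn y y' %| gcdn y y'') && ~~ (gcdn y y'' %| gcdn y y')].
Proof.
move=> x0 uY sY dY yY /hasPn H.
have ne : map (gcdn y) (rem y Y) != [::].
  rewrite -size_eq0 size_map size_rem //; move: sY; case: (size Y) => [|[|k]] //.
case: (max_in ne) => a aM amax.
have := H a aM => /allPn[b bM nba].
case/mapP: aM => y' y'R ea; case/mapP: bM => y'' y''R eb.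
move: (y'R) (y''R); rewrite !mem_rem_uniq // !inE => /andP[n1 y'Y] /andP[n2 y''Y].
exists y', y''; split => //; rewrite -?ea -?eb nba andbT.
apply: contra nba => ab.
have b0 : 0 < b.
  rewrite eb gcdn_gt0; apply/orP; left; exact: dvdn_gt0 x0 (dY _ yY).
have := amax b; rewrite eb => /(_ (map_f _ y''R)); rewrite -eb => ba.
have := dvdn_leq b0 ab => le.
by have -> : a = b by apply/eqP; rewrite eqn_leq le ba.
Qed.

Lemma pos_main n : forall x Y, size Y = n.+2 -> 0 < x -> uniq Y ->
  (forall y, y \in Y -> (y %| x) && (y != x)) -> antichain Y ->
  (n = 0 \/ exists T : seq nat,
     [/\ uniq T, size T <= n.+2 + 4 & forall t, closed x Y t -> t \in T]) ->
  (0 < G x Y)%R.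
Proof.
elim: n => [|n IH] x Y sY x0 uY dY aY hT.
  case: Y sY uY dY aY {hT} => [|y1 [|y2 [|]]] //= _ uY dY aY.
  have /andP[h1 _] := dY y1 (mem_head _ _).
  have /andP[h2 _] : (y2 %| x) && (y2 != x) by apply: dY; rewrite !inE eqxx orbT.
  have ne : y1 != y2 by move: uY; rewrite inE andbT.
  apply: base2 => //.
    apply: contra ne => d; apply/eqP; apply: aY => //; by rewrite !inE eqxx ?orbT.
  apply: contra ne => d; apply/eqP; symmetry; apply: aY => //; by rewrite !inE eqxx ?orbT.
case: hT => [//|[T [uT sT cT]]].
have dx y : y \in Y -> y %| x by move=> /dY/andP[].
have nx y : y \in Y -> y != x by move=> /dY/andP[].
have ypos y : y \in Y -> 0 < y by move=> /dx; apply: dvdn_gt0.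
set M := fun y => map (gcdn y) (rem y Y).
have clY y : y \in Y -> closed x Y y.
  move=> yY; apply: closedI; first exact: dx.
  by move=> u _ h; apply: h.
have clx : closed x Y x by apply: closedI => // u.
have sY' : 1 < size Y by rewrite sY.
have dv2 t y1 y2 : y1 \in Y -> y2 \in Y -> y1 != y2 -> t %| y1 -> t %| y2 ->
    (t \notin Y) && (t != x).
  move=> y1Y y2Y ne t1 t2; apply/andP; split.
    apply/negP => tY; move/negP: ne; apply.
    by rewrite -(aY _ _ tY y1Y t1) -(aY _ _ tY y2Y t2).
  apply/negP => /eqP tx; move/negP: (nx _ y1Y); apply.
  by rewrite eqn_dvd dx //= -tx.
have key : exists2 y, y \in Y & exists2 m, m \in M y & all (fun m' => m' %| m) (M y).
  case: (boolP (has (fun y => has (fun m => all (fun m' => m' %| m) (M y)) (M y)) Y)).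
    by move=> /hasP[y yY /hasP[m mM hm]]; exists y => //; exists m.
  move=> /hasPn H; exfalso.
  have count4 t1 t2 t3 t4 : uniq [:: t1; t2; t3; t4] ->
      (forall i, i \in [:: t1; t2; t3; t4] -> [&& closed x Y i, i \notin Y & i != x]) ->
      False.
    move=> u4 h4.
    have : uniq (x :: Y ++ [:: t1; t2; t3; t4]).
      rewrite cons_uniq cat_uniq uY u4 mem_cat negb_or.
      have -> : x \notin Y by apply/negP => xY; move/negP: (nx _ xY); rewrite eqxx.
      have -> : x \notin [:: t1; t2; t3; t4] by apply/negP => /(h4 x); rewrite eqxx !andbF.
      have -> // : ~~ has (mem Y) [:: t1; t2; t3; t4].
      by apply/hasPn => i /h4 /and3P[].
    move/uniq_leq_size => /(_ T) h.
    have : size (x :: Y ++ [:: t1; t2; t3; t4]) <= size T.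
      apply: h => i; rewrite inE mem_cat => /orP[/eqP->|/orP[iY|/h4/and3P[ci _ _]]].
      - exact: cT.
      - exact/cT/clY.
      - exact: cT.
    rewrite /= size_cat sY /=; lia.
  have Y0 : nth 0 Y 0 \in Y by apply: mem_nth; rewrite sY.
  move: (nth 0 Y 0) Y0 => y0 Y0.
  have [y' [y'' [y'Y y''Y n' n'' /andP[nab nba]]]] := two_incomp x0 uY sY' dx Y0 (H _ Y0).
  set a := gcdn y0 y' in nab nba *; set b := gcdn y0 y'' in nab nba *.
  set c := gcdn a b.
  have a0 : a %| y0 by apply: dvdn_gcdl.
  have b0 : b %| y0 by apply: dvdn_gcdl.
  have ca : c %| a by apply: dvdn_gcdl.
  have cb : c %| b by apply: dvdn_gcdr.
  have clg t : t %| x -> (forall u, (forall y, y \in Y -> t %| y -> u %| y) -> u %| t) ->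
      closed x Y t.
    by move=> tx h; apply: closedI => // u _; apply: h.
  have cla : closed x Y a.
    apply: clg; first exact: dvdn_trans a0 (dx _ Y0).
    by move=> u h; rewrite dvdn_gcd h // h ?dvdn_gcdr.
  have clb : closed x Y b.
    apply: clg; first exact: dvdn_trans b0 (dx _ Y0).
    by move=> u h; rewrite dvdn_gcd h // h ?dvdn_gcdr.
  have clc : closed x Y c.
    apply: clg; first exact: dvdn_trans ca (dvdn_trans a0 (dx _ Y0)).
    move=> u h; rewrite !dvdn_gcd !h //.
    - exact: dvdn_trans cb (dvdn_gcdr _ _).
    - exact: dvdn_trans ca (dvdn_gcdr _ _).
    - exact: dvdn_trans ca a0.
  have nay : (a \notin Y) && (a != x) by apply: (dv2 _ y0 y'); rewrite // 1?eq_sym // dvdn_gcdr.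
  have nby : (b \notin Y) && (b != x) by apply: (dv2 _ y0 y''); rewrite // 1?eq_sym // dvdn_gcdr.
  have ncy : (c \notin Y) && (c != x).
    apply: (dv2 _ y0 y') => //; rewrite 1?eq_sym //.
      exact: dvdn_trans ca a0.
    exact: dvdn_trans ca (dvdn_gcdr _ _).
  have neab : a != b by apply: contra nab => /eqP->.
  have neca : c != a by apply: contra nab => /eqP <-.
  have necb : c != b by apply: contra nba => /eqP <-.
  have only3 t : closed x Y t -> t \notin Y -> t != x -> t \in [:: a; b; c].
    move=> ct tY tx; apply/negPn/negP => nt.
    apply: (count4 a b c t).
      move: nt; rewrite !inE !negb_or => /and3P[nta ntb ntc].
      by rewrite /= !inE !negb_or neab (eq_sym a c) neca (eq_sym b c) necb (eq_sym a t) nta (eq_sym b t) ntb (eq_sym c t) ntc.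
    move=> i; rewrite !inE => /orP[/eqP->|/orP[/eqP->|/orP[/eqP->|/eqP->]]];
      by rewrite ?cla ?clb ?clc ?ct /= ?nay ?nby ?ncy ?tY ?tx.
  set B := cl x Y 1.
  have By y : y \in Y -> B %| y by move=> yY; have [_ h] := (dvd_cl B x Y 1).1 (dvdnn _); apply: h.
  have clB : closed x Y B.
    apply: closedI; first by rewrite /B /cl dvdn_gcdl.
    move=> u ux h; apply/dvd_cl; split => // y yY _; apply: h => //; exact: By.
  have Bc : B %| c by rewrite !dvdn_gcd !By.
  have eBc : B = c.
    have nBy : (B \notin Y) && (B != x) by apply: (dv2 _ y0 y'); rewrite // 1?eq_sym // By.
    case/andP: nBy => nBy nBx.
    move: (only3 _ clB nBy nBx); rewrite !inE => /or3P[] /eqP eB.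
    - by move: nab; rewrite -eB (dvdn_trans Bc cb).
    - by move: nba; rewrite -eB (dvdn_trans Bc ca).
    - by [].
  have ay y : y \in Y -> a %| y.
    move=> yY; case: (eqVneq y y0) => [->//|ny].
    have [z' [z'' [z'Y z''Y m' m'' /andP[n1 n2]]]] := two_incomp x0 uY sY' dx yY (H _ yY).
    set a1 := gcdn y z' in n1 n2; set b1 := gcdn y z'' in n1 n2.
    have a1y : a1 %| y by apply: dvdn_gcdl.
    have b1y : b1 %| y by apply: dvdn_gcdl.
    have a1z : a1 %| z' by apply: dvdn_gcdr.
    have b1z : b1 %| z'' by apply: dvdn_gcdr.
    have cla1 : closed x Y a1.
      apply: clg; first exact: dvdn_trans a1y (dx _ yY).
      by move=> u h; rewrite dvdn_gcd (h y) ?(h z').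
    have clb1 : closed x Y b1.
      apply: clg; first exact: dvdn_trans b1y (dx _ yY).
      by move=> u h; rewrite dvdn_gcd (h y) ?(h z'').
    have /andP[na1 na1x] : (a1 \notin Y) && (a1 != x).
      by apply: (dv2 _ y z'); rewrite // 1?eq_sym.
    have /andP[nb1 nb1x] : (b1 \notin Y) && (b1 != x).
      by apply: (dv2 _ y z''); rewrite // 1?eq_sym.
    have cdiv t : t \in [:: a; b; c] -> c %| t.
      by rewrite !inE => /or3P[] /eqP->.
    have := only3 _ cla1 na1 na1x; have := only3 _ clb1 nb1 nb1x.
    move=> hb1 ha1.
    have na1c : a1 != c by apply: contra n1 => /eqP->; apply: cdiv.
    have nb1c : b1 != c by apply: contra n2 => /eqP->; apply: cdiv.
    move: ha1 hb1; rewrite !inE (negbTE na1c) (negbTE nb1c) !orbF.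
    case/orP=> /eqP ea1; first by rewrite -ea1.
    case/orP=> /eqP eb1; first by rewrite -eb1.
    by move: n1; rewrite ea1 eb1 dvdnn.
  have aB : a %| B.
    apply/dvd_cl; split; last by move=> y yY _; apply: ay.
    exact: dvdn_trans a0 (dx _ Y0).
  by move: neca; rewrite -eBc eqn_dvd aB andbT (dvdn_trans Bc ca).
case: key => y yY [m mM hm].
set Y' := rem y Y.
have pY : perm_eq Y (y :: Y') by apply: perm_to_rem.
rewrite (G_perm x pY) /= (gcdn_idPr (dx _ yY)).
have uY' : uniq Y' by apply: rem_uniq.
have memY' z : z \in Y' = (z != y) && (z \in Y) by rewrite mem_rem_uniq // inE.
have neg : (G y Y' < 0)%R.
  rewrite -(G_map Y' (dvdnn y)).
  have pM : perm_eq (map (gcdn y) Y') (rem m (M y) ++ [:: m]).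
    apply: (perm_trans (perm_to_rem mM)).
    by rewrite -cat1s perm_catC.
  rewrite (G_perm y pM) G_cat_rem; last first.
    apply/allP => d dR; rewrite /= orbF.
    by apply: (allP hm); apply: mem_rem dR.
  case/mapP: mM => z zY' ->.
  rewrite G1 gcdnA gcdnn.
  have zY : z \in Y by move: zY'; rewrite memY' => /andP[].
  have nzy : z != y by move: zY'; rewrite memY' => /andP[].
  have y0 := ypos _ yY.
  have g0 : 0 < gcdn y z by rewrite gcdn_gt0 y0.
  have lt : gcdn y z < y.
    rewrite ltn_neqAle dvdn_leq ?dvdn_gcdl // andbT.
    apply/negP => /eqP e; move/negP: nzy; apply; apply/eqP.
    by symmetry; apply: aY => //; rewrite -e dvdn_gcdr.
  rewrite subr_lt0 ltf_pV2 ?posrE ?ltr0n //. by rewrite ltr_nat.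
have posY' : (0 < G x Y')%R.
  apply: (IH x Y') => //.
  - by rewrite size_rem // sY.
  - by move=> z; rewrite memY' => /andP[_ /dY].
  - by move=> z z'; rewrite !memY' => /andP[_ h1] /andP[_ h2]; apply: aY.
  right; exists (rem y T); split.
  - exact: rem_uniq.
  - rewrite size_rem; first by move: sT; case: (size T) => //= k; rewrite addSn ltnS.
    exact: cT (clY _ yY).
  - move=> t ct.
    have ctY : closed x Y t.
      case/andP: ct => tx ct; rewrite /closed tx /=.
      apply: dvdn_trans ct; apply/dvd_cl; split; first by apply: dvdn_gcdl.
      move=> z zY' tz.
      have [_ h] := (dvd_cl (cl x Y t) x Y t).1 (dvdnn _).
      by apply: h => //; move: zY'; rewrite memY' => /andP[].
    rewrite mem_rem_uniq // inE (cT _ ctY) andbT.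
    apply/negP => /eqP ety; move: ct; rewrite ety => /andP[_ cy].
    have xc : x %| cl x Y' y.
      apply/dvd_cl; split => // z zY' yz.
      move: zY'; rewrite memY' => /andP[nzy zY].
      by move: nzy; rewrite (aY _ _ yY zY yz) eqxx.
    have := nx _ yY; rewrite eqn_dvd dx //= (dvdn_trans xc cy).
    by [].
lra.
Qed.


Fixpoint psi_f (S : seq nat) (n a : nat) : rat :=
  if n is n'.+1 then ((a%:R)^-1 - \sum_(e <- S | ((e %| a) && (e != a))%N) psi_f S n' e)%R
  else 0%R.
Definition psi S a := psi_f S a.+1 a.

Lemma psi_f_eq S : all (fun x => 0 < x) S -> forall n m a, 0 < a -> a < n -> a < m ->
  psi_f S n a = psi_f S m a.
Proof.
move=> /allP pS; elim=> [|n IH] [|m] a a0 //= an am.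
congr (_ - _)%R; rewrite big_seq_cond [RHS]big_seq_cond; apply: eq_bigr => e.
case/andP=> eS /andP[ea nea].
have e0 := pS _ eS.
have : e < a by rewrite ltn_neqAle nea dvdn_leq.
by move=> lt; apply: IH => //; lia.
Qed.

Lemma psi_eq S a : all (fun x => 0 < x) S -> 0 < a ->
  psi S a = ((a%:R)^-1 - \sum_(e <- S | ((e %| a) && (e != a))%N) psi S e)%R.
Proof.
move=> pS a0; rewrite {1}/psi [psi_f S a.+1 a]/=; congr (_ - _)%R.
rewrite big_seq_cond [RHS]big_seq_cond; apply: eq_bigr => e.
case/andP=> eS /andP[ea nea].
have e0 := (allP pS) _ eS.
have lt : e < a by rewrite ltn_neqAle nea dvdn_leq.
by apply: (psi_f_eq pS).
Qed.

Lemma zeta S a : uniq S -> all (fun x => 0 < x) S -> a \in S ->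
  ((a%:R)^-1 = \sum_(e <- S | (e %| a)%N) psi S e)%R.
Proof.
move=> uS pS aS; have a0 := (allP pS) _ aS.
rewrite -big_filter (bigD1_seq a) ?filter_uniq ?mem_filter ?dvdnn ?aS //=.
by rewrite big_filter_cond (psi_eq pS a0) subrK.
Qed.

Lemma swap_sum (n : nat) (S : seq nat) (w : 'I_n -> rat) (p : 'I_n -> nat -> bool)
  (q : nat -> bool) (f : nat -> rat) :
  (\sum_(i < n) w i * \sum_(e <- S | p i e && q e) f e =
   \sum_(e <- S | q e) f e * \sum_(i < n | p i e) w i)%R.
Proof.
transitivity (\sum_(i < n) \sum_(e <- S) (if p i e && q e then w i * f e else 0))%R.
  apply: eq_bigr => i _; rewrite big_distrr big_mkcond /=.
  by apply: eq_bigr => e _; case: ifP.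
rewrite exchange_big /= [RHS]big_mkcond; apply: eq_bigr => e _.
case: (q e); last by rewrite big1 // => i _; rewrite andbF.
rewrite big_distrr [RHS]big_mkcond /=; apply: eq_bigr => i _.
by rewrite andbT; case: ifP; rewrite ?mulr0 // mulrC.
Qed.

Lemma kernel0 S (v : 'rV[rat]_(size S)) : uniq S -> all (fun x => 0 < x) S ->
  gcd_closed S -> (forall a, a \in S -> psi S a != 0%R) ->
  (v *m lcm_matrix S = 0)%R -> v = 0%R.
Proof.
move=> uS pS gS nz vA.
set n := size S in v vA *.
set x := fun i : 'I_n => nth 0 S i.
have xS i : x i \in S by apply: mem_nth.
have x0 i : 0 < x i by apply: (allP pS).
set w := fun i : 'I_n => (v 0 i * (x i)%:R)%R.
set W := fun e => (\sum_(i < n | (e %| x i)%N) w i)%R.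
have eqj (j : 'I_n) : (\sum_(e <- S | (e %| x j)%N) psi S e * W e = 0)%R.
  have := congr1 (fun M : 'M[rat]_(1, n) => M 0%R j) vA; rewrite !mxE.
  have -> : (\sum_j0 v 0 j0 * lcm_matrix S j0 j =
            (x j)%:R * \sum_(i < n) w i * \sum_(e <- S | ((e %| x i) && (e %| x j))%N) psi S e)%R.
    rewrite big_distrr; apply: eq_bigr => i _; rewrite /lcm_matrix mxE.
    have gS' : gcdn (x i) (x j) \in S.
      by have := allP gS _ (xS i) => /allP /(_ _ (xS j)).
    have g0 : 0 < gcdn (x i) (x j) by rewrite gcdn_gt0 x0.
    rewrite -(eq_bigl _ _ (fun e => dvdn_gcd e (x i) (x j))) -(zeta uS pS gS').
    have e : ((lcmn (x i) (x j))%:R = (x i)%:R * (x j)%:R / (gcdn (x i) (x j))%:R :> rat)%R.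
      rewrite -natrM -muln_lcm_gcd natrM mulfK // pnatr_eq0 -lt0n //.
    rewrite e /w /=; field; by rewrite pnatr_eq0 -lt0n.
  rewrite swap_sum => /eqP; rewrite mulf_eq0 pnatr_eq0 (negbTE (lt0n_neq0 (x0 j))) /= => /eqP H.
  exact: H.
have jof a : a \in S -> exists j : 'I_n, x j = a.
  move=> aS; have ia : index a S < n by rewrite /n index_mem.
  by exists (Ordinal ia); rewrite /x /= nth_index.
have W0 : forall k a, a \in S -> a < k -> W a = 0%R.
  elim=> [//|k IH] a aS ak.
  have [j xj] := jof a aS.
  have := eqj j; rewrite xj.
  rewrite -big_filter (bigD1_seq a) ?filter_uniq ?mem_filter ?dvdnn ?aS //=.
  rewrite big_filter_cond big1_seq ?addr0.
    by move/eqP; rewrite mulf_eq0 (negbTE (nz _ aS)) /= => /eqP.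
  move=> e /andP[/andP[ea nea] eS].
  have e0 := (allP pS) _ eS.
  have lt : e < a by rewrite ltn_neqAle nea dvdn_leq // (allP pS).
  by rewrite (IH e) ?mulr0 //; lia.
set Mx := \max_(i < n) x i.
have w0 : forall k (i : 'I_n), Mx - x i < k -> w i = 0%R.
  elim=> [//|k IH] i lt.
  have := W0 (x i).+1 (x i) (xS i) (ltnSn _).
  rewrite /W (bigD1 i) ?dvdnn //= big1 ?addr0 //.
  move=> i' /andP[d ne].
  have ne' : x i != x i'.
    by rewrite /x nth_uniq // eq_sym.
  have lt' : x i < x i' by rewrite ltn_neqAle ne' dvdn_leq.
  have le' : x i' <= Mx by apply: (leq_bigmax (F := x)).
  by apply: IH; lia.
apply/rowP => i; rewrite mxE.
have := w0 (Mx - x i).+1 i (ltnSn _); rewrite /w => /eqP.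
by rewrite mulf_eq0 pnatr_eq0 (negbTE (lt0n_neq0 (x0 i))) orbF => /eqP.
Qed.

Lemma lcm_unit S : uniq S -> all (fun x => 0 < x) S -> gcd_closed S ->
  (forall a, a \in S -> psi S a != 0%R) -> lcm_matrix S \in unitmx.
Proof.
move=> uS pS gS nz.
rewrite -row_free_unit -kermx_eq0; apply/eqP/row_matrixP => i.
rewrite row0; apply: (kernel0 uS pS gS nz).
by rewrite -row_mul mulmx_ker row0.
Qed.


Definition Ydiv (S : seq nat) x := [seq y <- S | (y %| x) && (y != x)].
Definition Ymax S x :=
  [seq y <- Ydiv S x | all (fun y' => (y %| y') ==> (y == y')) (Ydiv S x)].

Lemma gclosed_big S x (L : seq nat) (P : pred nat) : gcd_closed S -> x \in S ->
  {subset L <= S} -> gcdn x (\big[gcdn/0]_(y <- L | P y) y) \in S.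
Proof.
move=> gS xS; elim: L => [|y L IH] LS; first by rewrite big_nil gcdn0.
have yS : y \in S by apply: LS; apply: mem_head.
have LS' : {subset L <= S} by move=> z zL; apply: LS; rewrite inE zL orbT.
rewrite big_cons; case: ifP => _; last exact: IH.
rewrite gcdnCA gcdnC.
by have := allP gS _ (IH LS') => /allP; apply.
Qed.

Lemma sumG S : uniq S -> all (fun x => 0 < x) S -> gcd_closed S ->
  forall Y x, x \in S -> {subset Y <= S} ->
  (\sum_(e <- S | ((e %| x) && all (fun y => ~~ (e %| y)) Y)%N) psi S e = G x Y)%R.
Proof.
move=> uS pS gS; elim=> [|y Y IH] x xS YS.
  by rewrite /= (zeta uS pS xS); apply: eq_bigl => e; rewrite andbT.
have yS : y \in S by apply: YS; apply: mem_head.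
have YS' : {subset Y <= S} by move=> z zY; apply: YS; rewrite inE zY orbT.
have gxy : gcdn x y \in S by have := allP gS _ xS => /allP /(_ _ yS).
rewrite /= -(IH _ xS YS') -(IH _ gxy YS').
rewrite [X in (_ = X - _)%R](bigID (fun e => e %| y)) /=.
have HA : (\sum_(i <- S | (((i %| x) && all (fun y0 : nat => ~~ (i %| y0)) Y) && (i %| y))%N) psi S i =
          \sum_(e <- S | ((e %| gcdn x y) && all (fun y0 : nat => ~~ (e %| y0)) Y)%N) psi S e)%R.
  by apply: eq_bigl => e; rewrite dvdn_gcd; case: (e %| x); case: (e %| y); case: (all _ _).
have HB : (\sum_(i <- S | (((i %| x) && all (fun y0 : nat => ~~ (i %| y0)) Y) && ~~ (i %| y))%N) psi S i =
          \sum_(e <- S | ((e %| x) && (~~ (e %| y) && all (fun y0 : nat => ~~ (e %| y0)) Y))%N) psi S e)%R.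
  by apply: eq_bigl => e; case: (e %| x); case: (e %| y); case: (all _ _).
rewrite HA HB; ring.
Qed.

Lemma psi_G S x : uniq S -> all (fun x => 0 < x) S -> gcd_closed S -> x \in S ->
  psi S x = G x (Ydiv S x).
Proof.
move=> uS pS gS xS.
rewrite -(sumG uS pS gS xS); last by move=> y; rewrite mem_filter => /andP[].
rewrite -big_filter (bigD1_seq x) ?filter_uniq //; last first.
  rewrite mem_filter xS dvdnn /= andbT; apply/allP => y.
  rewrite mem_filter => /andP[/andP[yx nyx] _]; apply/negP => xy.
  by move: nyx; rewrite eqn_dvd yx xy.
rewrite big_filter_cond big1_seq; first by rewrite /= addr0.
move=> e /andP[/andP[/andP[ex /allP al] nex] eS].
by have := al e; rewrite mem_filter ex nex eS dvdnn => /(_ isT).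
Qed.

Lemma above_max S x d : all (fun x => 0 < x) S -> d \in Ydiv S x ->
  exists2 y, y \in Ymax S x & d %| y.
Proof.
move=> pS dD.
have ne : [seq z <- Ydiv S x | d %| z] != [::].
  by apply/eqP => e; move: (mem_filter (fun z => d %| z) d (Ydiv S x)); rewrite e dD dvdnn.
case: (max_in ne) => a; rewrite mem_filter => /andP[da aD] amax.
exists a => //; rewrite mem_filter aD andbT.
apply/allP => y' yD; apply/implyP => ay'.
have y'0 : 0 < y'.
  by move: yD; rewrite mem_filter => /andP[_ /(allP pS)].
have le1 : y' <= a by apply: amax; rewrite mem_filter yD (dvdn_trans da ay').
by rewrite eqn_leq le1 andbT dvdn_leq.
Qed.

Lemma G_max S x : all (fun x => 0 < x) S -> G x (Ydiv S x) = G x (Ymax S x).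
Proof.
move=> pS.
set p := fun y => all (fun y' => (y %| y') ==> (y == y')) (Ydiv S x).
have pD : perm_eq (Ydiv S x) ([seq y <- Ydiv S x | predC p y] ++ [seq y <- Ydiv S x | p y]).
  by rewrite perm_sym perm_catC perm_filterC.
rewrite (G_perm x pD) G_cat_rem //.
apply/allP => d; rewrite mem_filter => /andP[_ dD].
by case: (above_max pS dD) => y yM dy; apply/hasP; exists y.
Qed.

Lemma Ymax_mem S x y : y \in Ymax S x -> [/\ y \in S, y %| x & y != x].
Proof. by rewrite !mem_filter => /andP[_ /andP[/andP[-> ->] ->]]. Qed.

Lemma Ymax_anti S x : antichain (Ymax S x).
Proof.
move=> y y' yM y'M yy'.
move: yM; rewrite mem_filter => /andP[/allP al _].
move: y'M; rewrite mem_filter => /andP[_ y'D].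
by apply/eqP; move: (al _ y'D); rewrite yy'.
Qed.

Lemma Ymax_uniq S x : uniq S -> uniq (Ymax S x).
Proof. by move=> uS; rewrite !filter_uniq. Qed.

Lemma closedD S x t : gcd_closed S -> x \in S -> closed x (Ymax S x) t ->
  t \in [seq e <- S | e %| x].
Proof.
move=> gS xS /andP[tx ct].
have e : t = cl x (Ymax S x) t.
  apply/eqP; rewrite eqn_dvd ct andbT; apply/dvd_cl; split => //.
rewrite mem_filter tx /= e; apply: gclosed_big => // y /Ymax_mem[].
by [].
Qed.

Lemma psi0 S x : uniq S -> all (fun x => 0 < x) S -> gcd_closed S -> size S <= 8 ->
  x \in S -> psi S x = 0%R ->
  size (Ymax S x) = 3 /\
  forall T, uniq T -> size T <= 7 -> ~ (forall t, closed x (Ymax S x) t -> t \in T).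
Proof.
move=> uS pS gS sS xS.
rewrite (psi_G uS pS gS xS) (G_max x pS).
set Y := Ymax S x.
have x0 : 0 < x := (allP pS) _ xS.
have uY : uniq Y by apply: Ymax_uniq.
have dY y : y \in Y -> (y %| x) && (y != x) by case/Ymax_mem => _ -> ->.
have aY : antichain Y by apply: Ymax_anti.
have pos k : size Y = k.+2 -> (k = 0 \/ exists T : seq nat,
     [/\ uniq T, size T <= k.+2 + 4 & forall t, closed x Y t -> t \in T]) ->
    (0 < G x Y)%R.
  by move=> sk h; apply: (pos_main sk).
move=> G0.
case sY : (size Y) => [|[|[|[|k]]]].
- by move: G0; case: (Y) sY => //= _; move/eqP; rewrite invr_eq0 pnatr_eq0 (negbTE (lt0n_neq0 x0)).
- move: G0; case: (Y) sY dY => [|y [|]] //= _ dY.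
  move/eqP; rewrite subr_eq0 => /eqP.
  have /andP[yx nyx] := dY y (mem_head _ _).
  rewrite (gcdn_idPr yx) => /(congr1 (fun r => r^-1)%R); rewrite !invrK => /eqP.
  by rewrite eqr_nat eq_sym (negbTE nyx).
- by have := pos 0 sY (or_introl erefl); rewrite G0 ltxx.
- split => // T uT sT cT.
  have := pos 1 sY; rewrite G0 ltxx => h; suff : false by []; apply: h; right; exists T; split => //.
- have := pos k.+2 sY; rewrite G0 ltxx => h; suff : false by []; apply: h; right.
  exists [seq e <- S | e %| x]; split.
  + exact: filter_uniq.
  + by rewrite size_filter; apply: leq_trans (count_size _ _) _; apply: leq_trans sS _; lia.
  + by move=> t; apply: closedD.
Qed.


Lemma cube S x Y : uniq S -> size S = 8 -> x \in S ->
  (forall t, closed x Y t -> t \in S) -> size Y = 3 ->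
  (forall T, uniq T -> size T <= 7 -> ~ (forall t, closed x Y t -> t \in T)) ->
  iso_to_cube S.
Proof.
move=> uS sS xS cS sY noT.
pose yv (i : 'I_3) := nth 0 Y i.
pose h (A : {set 'I_3}) := gcdn x (\big[gcdn/0]_(i | i \notin A) yv i).
have ch u (A : {set 'I_3}) : u %| h A <-> u %| x /\ (forall i, i \notin A -> u %| yv i).
  rewrite /h dvdn_gcd; split.
    by case/andP=> -> /dvdn_biggcdP.
  by case=> -> /dvdn_biggcdP.
have memY y : y \in Y -> exists i : 'I_3, y = yv i.
  move=> yY; have iy : index y Y < 3 by rewrite -sY index_mem.
  by exists (Ordinal iy); rewrite /yv /= nth_index.
have yvY (i : 'I_3) : yv i \in Y by apply: mem_nth; rewrite sY.
have hx (A : {set 'I_3}) : h A %| x by have [] := (ch (h A) A).1 (dvdnn _).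
have hy (A : {set 'I_3}) i : i \notin A -> h A %| yv i by have [_] := (ch (h A) A).1 (dvdnn _); apply.
have clh (A : {set 'I_3}) : closed x Y (h A).
  apply: closedI => // u ux hu; apply/ch; split => // i iA.
  by apply: hu => //; apply: hy.
have clt t : closed x Y t -> t = h [set i | ~~ (t %| yv i)].
  case/andP=> tx ct; apply/eqP; rewrite eqn_dvd; apply/andP; split.
    apply/ch; split => // i; rewrite inE negbK; by [].
  apply: dvdn_trans ct; apply/dvd_cl; split => // y yY ty.
  by case: (memY y yY) ty => i -> ty; apply: hy; rewrite inE negbK.
have card8 : size (enum {set 'I_3}) = 8.
  by rewrite -cardE -cardsT -powersetT card_powerset cardsT card_ord.
have inj : injective h.
  apply/injectiveP; apply/negPn/negP => ni.
  have lt : size (undup (map h (enum {set 'I_3}))) < 8.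
    by rewrite -card8 -(size_map h) ltn_size_undup.
  apply: (noT (undup (map h (enum {set 'I_3})))).
  - exact: undup_uniq.
  - by [].
  - move=> t ct; rewrite mem_undup (clt t ct); apply: map_f; rewrite mem_enum.
    by [].
have hS (A : {set 'I_3}) : h A \in S by apply: cS.
have allh : forall t, t \in S -> exists A, t = h A.
  have uM : uniq (map h (enum {set 'I_3})) by rewrite map_inj_uniq // enum_uniq.
  have sub : {subset map h (enum {set 'I_3}) <= S} by move=> z /mapP[A _ ->].
  have le : size S <= size (map h (enum {set 'I_3})) by rewrite size_map card8 sS.
  have [_ eqS] := uniq_min_size uM sub le.
  by move=> t; rewrite -eqS => /mapP[A _ ->]; exists A.
have mono (A B : {set 'I_3}) : A \subset B -> h A %| h B.
  move=> AB; apply/ch; split => // i iB; apply: hy.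
  by apply: contra iB; apply: (subsetP AB).
pose f t := [set i | ~~ (t %| yv i)].
have fh (A : {set 'I_3}) : f (h A) = A.
  apply/setP => i; rewrite inE.
  case: (boolP (i \in A)) => iA; last by rewrite hy.
  apply/negP => d.
  have e : h A = h (A :\ i).
    apply/eqP; rewrite eqn_dvd; apply/andP; split.
      apply/ch; split => // j; rewrite !inE negb_and negbK => /orP[/eqP->//|].
      exact: hy.
    by apply: mono; apply: subD1set.
  by move: iA; rewrite (inj _ _ e) setD11.
exists f; split; last split.
- move=> t u tS uS0; case: (allh t tS) => A ->; case: (allh u uS0) => B ->.
  by rewrite !fh => ->.
- by move=> A; exists (h A); rewrite ?fh.
- move=> t u tS uS0; case: (allh t tS) => A ->; case: (allh u uS0) => B ->.
  rewrite !fh; apply/idP/idP; last exact: mono.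
  move=> d.
  have e : h A = h (A :&: B).
    apply/eqP; rewrite eqn_dvd; apply/andP; split.
      apply/ch; split => // j; rewrite inE negb_and => /orP[jA|jB].
        exact: hy.
      exact: dvdn_trans d (hy _ _ jB).
    by apply: mono; apply: subsetIl.
  by apply/setIidPl; rewrite -(inj _ _ e).
Qed.


Theorem theorem4p4 :
  (forall S : seq nat,
      uniq S -> all (fun x => 0 < x) S -> gcd_closed S -> size S <= 7 ->
      lcm_matrix S \in unitmx) /\
  (forall S : seq nat,
      uniq S -> all (fun x => 0 < x) S -> gcd_closed S -> size S = 8 ->
      lcm_matrix S \notin unitmx -> iso_to_cube S).
Proof.
split.
  move=> S uS pS gS sS; apply: lcm_unit => // a aS; apply/eqP => p0.
  have [_ noT] := psi0 uS pS gS (leq_trans sS (leqnSn _)) aS p0.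
  apply: (noT [seq e <- S | e %| a]).
  - exact: filter_uniq.
  - by rewrite size_filter; apply: leq_trans (count_size _ _) _.
  - by move=> t; apply: closedD.
move=> S uS pS gS sS nU.
have : ~~ all (fun a => psi S a != 0%R) S.
  by apply: contra nU => /allP h; apply: lcm_unit.
case/allPn => x xS /negPn /eqP p0.
have [s3 noT] := psi0 uS pS gS (eq_leq sS) xS p0.
apply: (cube uS sS xS _ s3 noT).
by move=> t ct; have := closedD gS xS ct; rewrite mem_filter => /andP[].
Qed.
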